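(* (1) If $v$ is a valuation over $\mathcal M_{\bf Tm}$, then the functions $v_1:For\to A_{\bf Dm}$ and $v_2:For\to A_{\bf Km}$ given by $v_1(\alpha)=v_2(\alpha)=v(\alpha)$ for every formula $\alpha$ are valuations over $\mathcal M_{\bf Dm}$ and $\mathcal M_{\bf Km}$, respectively. (2) If $v$ is a valuation over $\mathcal M_{\bf Dm}$, then the function $v_1:For\to A_{\bf Km}$ given by $v_1(\alpha)=v(\alpha)$ for every formula $\alpha$ is a valuation over $\mathcal M_{\bf Km}$.
   Context: Formulas are built from a denumerable set of propositional variables by the unary connectives $\neg$, $\Box$ and the binary connective $\to$; $For$ is the set of all formulas. An Nmatrix has a domain $A$, designated values $D\subseteq A$ and, for each connective, a multioperation giving nonempty subsets of $A$; a valuation over it is $v:For\to A$ with $v(\neg\alpha)\in\tilde\neg(v(\alpha))$, $v(\Box\alpha)\in\tilde\Box(v(\alpha))$, $v(\alpha\to\beta)\in v(\alpha)\tilde\to v(\beta)$. $\mathcal M_{\bf Km}$: domain $A_{\bf Km}=\{T^+,C^+,F^+,I^+,T^-,C^-,F^-,I^-\}$, designated $\{T^+,C^+,F^+,I^+\}$. Negation: $\tilde\neg T^+=\{F^-\}$, $\tilde\neg C^+=\{C^-\}$, $\tilde\neg F^+=\{T^-\}$, $\tilde\neg I^+=\{I^-\}$, $\tilde\neg T^-=\{F^+\}$, $\tilde\neg C^-=\{C^+\}$, $\tilde\neg F^-=\{T^+\}$, $\tilde\neg I^-=\{I^+\}$. $\tilde\Box x=\{T^+,C^+,F^+,I^+\}$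 if $x\in\{T^+,T^-,I^+,I^-\}$ and $\tilde\Box x=\{T^-,C^-,F^-,I^-\}$ otherwise. Implication (row $x$, column $y$): $$\begin{array}{c|cccccccc} \to & T^+ & C^+ & F^+ & I^+ & T^- & C^- & F^- & I^-\\\hline T^+ & \{T^+\}&\{C^+\}&\{F^+\}&\{I^+\}&\{T^-\}&\{C^-\}&\{F^-\}&\{I^-\}\\ C^+ & \{T^+\}&\{T^+,C^+\}&\{C^+\}&\{I^+\}&\{T^-\}&\{T^-,C^-\}&\{C^-\}&\{I^-\}\\ F^+ & \{T^+\}&\{T^+\}&\{T^+\}&\{I^+\}&\{T^-\}&\{T^-\}&\{T^-\}&\{I^-\}\\ I^+ & \{I^+\}&\{I^+\}&\{I^+\}&\{I^+\}&\{I^-\}&\{I^-\}&\{I^-\}&\{I^-\}\\ T^- & \{T^+\}&\{C^+\}&\{F^+\}&\{I^+\}&\{T^+\}&\{C^+\}&\{F^+\}&\{I^+\}\\ C^- & \{T^+\}&\{T^+,C^+\}&\{C^+\}&\{I^+\}&\{T^+\}&\{T^+,C^+\}&\{C^+\}&\{I^+\}\\ F^- & \{T^+\}&\{T^+\}&\{T^+\}&\{I^+\}&\{T^+\}&\{T^+\}&\{T^+\}&\{I^+\}\\ I^- & \{I^+\}&\{I^+\}&\{I^+\}&\{I^+\}&\{I^+\}&\{I^+\}&\{I^+\}&\{I^+\}\end{array}$$ $\mathcal M_{\bf Dm}$: domain $A_{\bf Dm}=\{T^+,C^+,F^+,T^-,C^-,F^-\}$, designated $\{T^+,C^+,F^+\}$;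 negation and implication are the restrictions of those of $\mathcal M_{\bf Km}$ to this domain; $\tilde\Box x=\{T^+,C^+,F^+\}$ if $x\in\{T^+,T^-\}$ and $\tilde\Box x=\{T^-,C^-,F^-\}$ otherwise. $\mathcal M_{\bf Tm}$: domain $A_{\bf Tm}=\{T^+,C^+,C^-,F^-\}$, designated $\{T^+,C^+\}$; $\tilde\neg T^+=\{F^-\}$, $\tilde\neg C^+=\{C^-\}$, $\tilde\neg C^-=\{C^+\}$, $\tilde\neg F^-=\{T^+\}$; $x\tilde\to y$ is the intersection of the corresponding $\mathcal M_{\bf Km}$ entry with $A_{\bf Tm}$; $\tilde\Box T^+=\{T^+,C^+\}$ and $\tilde\Box x=\{C^-,F^-\}$ for $x\neq T^+$. *)

(* Defs.v *)
From Stdlib Require Import List.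

Inductive For : Type :=
| Var : nat -> For
| Neg : For -> For
| Box : For -> For
| Imp : For -> For -> For.

(* The 8 truth values of A_Km; the smaller domains are subsets of it. *)
Inductive V8 : Type := Tp | Cp | Fp | Ip | Tm | Cm | Fm | Im.

Record Nmatrix : Type := {
  dom : V8 -> Prop;
  designated : V8 -> Prop;
  mneg : V8 -> V8 -> Prop;         (* mneg x y  <->  y \in ~neg x *)
  mbox : V8 -> V8 -> Prop;         (* mbox x y  <->  y \in ~box x *)
  mimp : V8 -> V8 -> V8 -> Prop    (* mimp x y z <-> z \in x ~-> y *)
}.

Definition valuation (M : Nmatrix) (v : For -> V8) : Prop :=
  (forall a, dom M (v a)) /\
  (forall a, mneg M (v a) (v (Neg a))) /\
  (forall a, mbox M (v a) (v (Box a))) /\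
  (forall a b, mimp M (v a) (v b) (v (Imp a b))).

Definition domKm (x : V8) : Prop := True.
Definition desKm (x : V8) : Prop := x = Tp \/ x = Cp \/ x = Fp \/ x = Ip.

Definition negKm (x : V8) : V8 :=
  match x with
  | Tp => Fm | Cp => Cm | Fp => Tm | Ip => Im
  | Tm => Fp | Cm => Cp | Fm => Tp | Im => Ip
  end.

Definition posV (x : V8) : Prop := x = Tp \/ x = Cp \/ x = Fp \/ x = Ip.
Definition negV (x : V8) : Prop := x = Tm \/ x = Cm \/ x = Fm \/ x = Im.

Definition boxKm (x y : V8) : Prop :=
  match x with
  | Tp | Tm | Ip | Im => posV y
  | _ => negV y
  end.

Definition impKm_list (x y : V8) : list V8 :=
  match x, y with
  | Tp, Tp => Tp :: nil | Tp, Cp => Cp :: nil | Tp, Fp => Fp :: nil | Tp, Ip => Ip :: nil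
  | Tp, Tm => Tm :: nil | Tp, Cm => Cm :: nil | Tp, Fm => Fm :: nil | Tp, Im => Im :: nil
  | Cp, Tp => Tp :: nil | Cp, Cp => Tp :: Cp :: nil | Cp, Fp => Cp :: nil | Cp, Ip => Ip :: nil
  | Cp, Tm => Tm :: nil | Cp, Cm => Tm :: Cm :: nil | Cp, Fm => Cm :: nil | Cp, Im => Im :: nil
  | Fp, Tp => Tp :: nil | Fp, Cp => Tp :: nil | Fp, Fp => Tp :: nil | Fp, Ip => Ip :: nil
  | Fp, Tm => Tm :: nil | Fp, Cm => Tm :: nil | Fp, Fm => Tm :: nil | Fp, Im => Im :: nil
  | Ip, Tp => Ip :: nil | Ip, Cp => Ip :: nil | Ip, Fp => Ip :: nil | Ip, Ip => Ip :: nil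
  | Ip, Tm => Im :: nil | Ip, Cm => Im :: nil | Ip, Fm => Im :: nil | Ip, Im => Im :: nil
  | Tm, Tp => Tp :: nil | Tm, Cp => Cp :: nil | Tm, Fp => Fp :: nil | Tm, Ip => Ip :: nil
  | Tm, Tm => Tp :: nil | Tm, Cm => Cp :: nil | Tm, Fm => Fp :: nil | Tm, Im => Ip :: nil
  | Cm, Tp => Tp :: nil | Cm, Cp => Tp :: Cp :: nil | Cm, Fp => Cp :: nil | Cm, Ip => Ip :: nil
  | Cm, Tm => Tp :: nil | Cm, Cm => Tp :: Cp :: nil | Cm, Fm => Cp :: nil | Cm, Im => Ip :: nil
  | Fm, Tp => Tp :: nil | Fm, Cp => Tp :: nil | Fm, Fp => Tp :: nil | Fm, Ip => Ip :: nil
  | Fm, Tm => Tp :: nil | Fm, Cm => Tp :: nil | Fm, Fm => Tp :: nil | Fm, Im => Ip :: nil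
  | Im, _ => Ip :: nil
  end.

Definition impKm (x y z : V8) : Prop := In z (impKm_list x y).

Definition M_Km : Nmatrix :=
  {| dom := domKm; designated := desKm;
     mneg := fun x y => y = negKm x; mbox := boxKm; mimp := impKm |}.

Definition domDm (x : V8) : Prop := x = Tp \/ x = Cp \/ x = Fp \/ x = Tm \/ x = Cm \/ x = Fm.
Definition desDm (x : V8) : Prop := x = Tp \/ x = Cp \/ x = Fp.

Definition boxDm (x y : V8) : Prop :=
  match x with
  | Tp | Tm => y = Tp \/ y = Cp \/ y = Fp
  | _ => y = Tm \/ y = Cm \/ y = Fm
  end.

Definition M_Dm : Nmatrix :=
  {| dom := domDm; designated := desDm;
     mneg := fun x y => y = negKm x; mbox := boxDm; mimp := impKm |}.

Definition domTm (x : V8) : Prop := x = Tp \/ x = Cp \/ x = Cm \/ x = Fm.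
Definition desTm (x : V8) : Prop := x = Tp \/ x = Cp.

Definition boxTm (x y : V8) : Prop :=
  match x with
  | Tp => y = Tp \/ y = Cp
  | _ => y = Cm \/ y = Fm
  end.

Definition impTm (x y z : V8) : Prop := impKm x y z /\ domTm z.

Definition M_Tm : Nmatrix :=
  {| dom := domTm; designated := desTm;
     mneg := fun x y => y = negKm x; mbox := boxTm; mimp := impTm |}.

(* Main.v *)
Require Import Defs.
From Stdlib Require Import List.

Lemma boxTD x y : domTm x -> boxTm x y -> boxDm x y.
Proof. unfold domTm, boxTm, boxDm; intros [H|[H|[H|H]]]; subst; tauto. Qed.

Lemma boxDK x y : domDm x -> boxDm x y -> boxKm x y.
Proof. unfold domDm, boxDm, boxKm, posV, negV; intros [H|[H|[H|[H|[H|H]]]]]; subst; tauto. Qed.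

Lemma domTD x : domTm x -> domDm x.
Proof. unfold domTm, domDm; tauto. Qed.

Theorem mainTheorem20 :
  (forall v : For -> V8, valuation M_Tm v -> valuation M_Dm v /\ valuation M_Km v) /\
  (forall v : For -> V8, valuation M_Dm v -> valuation M_Km v).
Proof.
  assert (HD : forall v, valuation M_Dm v -> valuation M_Km v).
  { intros v [Hd [Hn [Hb Hi]]]; simpl in *.
    repeat split; simpl; auto. intros a; apply boxDK; auto. }
  split; [|exact HD].
  intros v [Hd [Hn [Hb Hi]]]; simpl in *.
  assert (valuation M_Dm v).
  { repeat split; simpl; auto.
    - intros a; apply domTD; auto.
    - intros a; apply boxTD; auto.
    - intros a b; apply (Hi a b). }
  split; auto.
Qed.
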